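(* Let $\beta\in(0,1)$, $V_{\mathrm{th}}\in\mathbb{R}$, and let $c_1,\dots,c_T\in\mathbb{R}$ be an arbitrary input sequence. Let $\mathcal{H}(x)=1$ if $x\ge 0$ and $\mathcal{H}(x)=0$ otherwise. (Sequential LIF with soft reset.) Define $u_0=0$, $s_0=0$ and, for $t=1,\dots,T$, $$u_t=\beta\,(u_{t-1}-V_{\mathrm{th}}s_{t-1})+c_t,\qquad s_t=\mathcal{H}(u_t-V_{\mathrm{th}}).$$ (Decoupled reset.) Define, for $t=1,\dots,T$, $u'_t=\sum_{k=1}^{t}\beta^{t-k}c_k$ (equivalently $u'_0=0$, $u'_t=\beta u'_{t-1}+c_t$), and define $A_1=0$, $d_1=V_{\mathrm{th}}$ and, for $t=2,\dots,T$, $$A_t=\begin{cases}\beta\,(1+A_{t-1}), & \text{if } u'_{t-1}\ge d_{t-1},\\ \beta\,A_{t-1}, & \text{if } u'_{t-1}< d_{t-1},\end{cases}\qquad d_t=V_{\mathrm{th}}\,(A_t+1).$$ Then for every $t=1,\dots,T$, $s_t=\mathcal{H}(u'_t-d_t)$; that is, the spike train obtained from the decoupled-reset computation (in which $u'_1,\dots,u'_T$ do not depend on any spikes and $d_1,\dots,d_T$ are obtained from $u'_1,\dots,u'_T$ alone) coincides with that of the sequential LIF neuron with soft reset.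
   Context: The sequence $(u'_1,\dots,u'_T)$ is the discrete convolution of $(c_1,\dots,c_T)$ with the kernel $(\beta^0,\beta^1,\dots,\beta^{T-1})$, so it can be computed in parallel (e.g. via FFT), while $(d_t)$ is obtained by a single linear-time scan over $(u'_t)$. *)

(* Defs.v *)
From Stdlib Require Import Reals.
Open Scope R_scope.

Definition heaviside (x : R) : R := if Rle_dec 0 x then 1 else 0.

Fixpoint lif (beta Vth : R) (c : nat -> R) (t : nat) : R * R :=
  match t with
  | O => (0, 0)
  | S t' =>
      let (u, s) := lif beta Vth c t' in
      let u' := beta * (u - Vth * s) + c t in
      (u', heaviside (u' - Vth))
  end.

Definition lif_u beta Vth c t := fst (lif beta Vth c t).
Definition lif_s beta Vth c t := snd (lif beta Vth c t).

Definition u_dec (beta : R) (c : nat -> R) (t : nat) : R :=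
  sum_f 1 t (fun k => beta ^ (t - k) * c k).

(* Correct convention: sum_f 1 0 _ is not the empty sum, so guard t = 0. *)
Definition u_dec0 (beta : R) (c : nat -> R) (t : nat) : R :=
  match t with O => 0 | _ => u_dec beta c t end.

(* A_t for t >= 1 (A_1 = 0); index shifted: A_aux n = A_{n+1}. *)
Fixpoint A_aux (beta Vth : R) (c : nat -> R) (n : nat) : R :=
  match n with
  | O => 0
  | S n' =>
      let Aprev := A_aux beta Vth c n' in
      let dprev := Vth * (Aprev + 1) in
      if Rle_dec dprev (u_dec0 beta c (S n'))
      then beta * (1 + Aprev)
      else beta * Aprev
  end.

Definition A_dec beta Vth c (t : nat) : R := A_aux beta Vth c (t - 1).
Definition d_dec beta Vth c (t : nat) : R := Vth * (A_dec beta Vth c t + 1).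

(* Main.v *)
Require Import Defs.
From Stdlib Require Import Reals Lra Lia.
Open Scope R_scope.

Lemma u_dec_S (beta : R) (c : nat -> R) (n : nat) :
  u_dec beta c (S (S n)) = beta * u_dec beta c (S n) + c (S (S n)).
Proof.
  unfold u_dec, sum_f.
  replace (S (S n) - 1)%nat with (S n) by lia.
  replace (S n - 1)%nat with n by lia.
  rewrite tech5. rewrite scal_sum.
  f_equal.
  - apply sum_eq. intros i Hi.
    replace (S (S n) - (i + 1))%nat with (S (S n - (i + 1))) by lia.
    simpl. ring.
  - replace (S (S n) - (S n + 1))%nat with 0%nat by lia.
    replace (S n + 1)%nat with (S (S n)) by lia. simpl. ring.
Qed.

Lemma lif_char (beta Vth : R) (c : nat -> R) (n : nat) :
  lif beta Vth c (S n) =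
  (u_dec beta c (S n) - Vth * A_aux beta Vth c n,
   heaviside (u_dec beta c (S n) - Vth * (A_aux beta Vth c n + 1))).
Proof.
  induction n as [|n IH].
  - assert (H1 : u_dec beta c 1%nat = c 1%nat).
    { unfold u_dec, sum_f. simpl. ring. }
    simpl lif. rewrite H1. simpl A_aux. f_equal; [ring|f_equal; ring].
  - change (lif beta Vth c (S (S n))) with
      (let (u, s) := lif beta Vth c (S n) in
       let u' := beta * (u - Vth * s) + c (S (S n)) in
       (u', heaviside (u' - Vth))).
    rewrite IH. cbv zeta.
    rewrite u_dec_S.
    change (A_aux beta Vth c (S n)) with
      (if Rle_dec (Vth * (A_aux beta Vth c n + 1)) (u_dec beta c (S n))
       then beta * (1 + A_aux beta Vth c n) else beta * A_aux beta Vth c n).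
    set (h := heaviside (u_dec beta c (S n) - Vth * (A_aux beta Vth c n + 1))).
    assert (Hh : h = if Rle_dec (Vth * (A_aux beta Vth c n + 1)) (u_dec beta c (S n)) then 1 else 0).
    { unfold h, heaviside.
      destruct (Rle_dec 0 (u_dec beta c (S n) - Vth * (A_aux beta Vth c n + 1)));
      destruct (Rle_dec (Vth * (A_aux beta Vth c n + 1)) (u_dec beta c (S n))); lra. }
    rewrite Hh.
    destruct (Rle_dec (Vth * (A_aux beta Vth c n + 1)) (u_dec beta c (S n)));
    f_equal; try ring; f_equal; ring.
Qed.

Theorem mainTheorem1 (beta Vth : R) (c : nat -> R) (T : nat) :
  0 < beta < 1 ->
  forall t : nat, (1 <= t <= T)%nat ->
    lif_s beta Vth c t = heaviside (u_dec beta c t - d_dec beta Vth c t).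
Proof.
  intros _ t Ht. destruct t as [|n]; [lia|].
  unfold lif_s, d_dec, A_dec. rewrite lif_char. simpl snd.
  replace (S n - 1)%nat with n by lia. reflexivity.
Qed.
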